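(* Let $N$ be a finite set of $n\ge 1$ agents, each with value $v_i\ge 0$ and budget $b_i\ge 0$, and let $m>0$. Let $j$ be an agent chosen uniformly at random from $N$. Then $$\Pr\Big[\mathrm{OPT}(N\setminus\{j\},m)\ \ge\ \tfrac12\,\mathrm{OPT}(N,m)\Big]\ \ge\ 1-\frac1n .$$
   Context: For a set $S$ of agents and an amount $k>0$ of items, the optimal uniform-price revenue is $\mathrm{OPT}(S,k)=\max_{p>0}\ \min\Big(\sum_{i\in S,\ v_i\ge p}\frac{b_i}{p},\ k\Big)\cdot p$, i.e., the maximum revenue from selling at most $k$ items to agents of $S$ at a single price per item $p$, where each agent with $v_i\ge p$ buys as much as her budget allows; $p^\ast_{S,k}$ denotes a maximizing price. *)

(* Defs.v *)
From Stdlib Require Import Reals Lra Lia Classical ClassicalEpsilon.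
Open Scope R_scope.

(* Agents are indexed 0 .. n-1; v i = value, b i = budget.
   A set of agents S is a boolean predicate on nat (only indices < n matter). *)

Fixpoint sumR (n : nat) (f : nat -> R) : R :=
  match n with
  | O => 0
  | S n' => sumR n' f + f n'
  end.

Definition revenue (n : nat) (v b : nat -> R) (S : nat -> bool) (k p : R) : R :=
  Rmin (sumR n (fun i => if S i then (if Rle_dec p (v i) then b i / p else 0) else 0)) k * p.

Definition is_OPT (n : nat) (v b : nat -> R) (S : nat -> bool) (k r : R) : Prop :=
  (exists p, 0 < p /\ revenue n v b S k p = r) /\
  (forall p, 0 < p -> revenue n v b S k p <= r).

(* OPT(S,k) = max_{p>0} revenue (the maximum, chosen by Hilbert's epsilon;
   the maximum exists and is unique). *)
Definition OPT (n : nat) (v b : nat -> R) (S : nat -> bool) (k : R) : R :=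
  epsilon (inhabits 0) (fun r => is_OPT n v b S k r).

Definition allN (n : nat) : nat -> bool := fun i => Nat.ltb i n.
Definition minus1 (n j : nat) : nat -> bool :=
  fun i => andb (Nat.ltb i n) (negb (Nat.eqb i j)).

Definition prob_unif (n : nat) (P : nat -> Prop) : R :=
  sumR n (fun j => if excluded_middle_informative (P j) then 1 else 0) / INR n.

(* Main.v *)
Require Import Defs.
From Stdlib Require Import Reals Lra Lia Classical ClassicalEpsilon.
Open Scope R_scope.

Lemma sumR_ext n f g : (forall i, (i < n)%nat -> f i = g i) -> sumR n f = sumR n g.
Proof.
  induction n; simpl; intros H; [reflexivity|].
  rewrite IHn by (intros; apply H; lia). rewrite H by lia. reflexivity.
Qed.

Lemma sumR_div n f p : sumR n (fun i => f i / p) = sumR n f / p.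
Proof. induction n; simpl. unfold Rdiv; ring. rewrite IHn. unfold Rdiv; ring. Qed.

Lemma sumR_nonneg n f : (forall i, (i < n)%nat -> 0 <= f i) -> 0 <= sumR n f.
Proof.
  induction n; simpl; intros H; [lra|].
  assert (0 <= sumR n f) by (apply IHn; intros; apply H; lia).
  assert (0 <= f n) by (apply H; lia). lra.
Qed.

Lemma sumR_ge_term n f j : (forall i, (i < n)%nat -> 0 <= f i) -> (j < n)%nat -> f j <= sumR n f.
Proof.
  induction n; simpl; intros H Hj; [lia|].
  destruct (Nat.eq_dec j n) as [->|Hne].
  - assert (0 <= sumR n f) by (apply sumR_nonneg; intros; apply H; lia). lra.
  - assert (f j <= sumR n f) by (apply IHn; [intros; apply H; lia | lia]).
    assert (0 <= f n) by (apply H; lia). lra.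
Qed.

Definition Bs (n : nat) (v b : nat -> R) (S : nat -> bool) (p : R) : R :=
  sumR n (fun i => if S i then (if Rle_dec p (v i) then b i else 0) else 0).

Lemma rev_eq n v b S k p : 0 < p -> revenue n v b S k p = Rmin (Bs n v b S p) (k * p).
Proof.
  intros Hp. unfold revenue, Bs.
  rewrite (sumR_ext n _ (fun i => (if S i then (if Rle_dec p (v i) then b i else 0) else 0) / p)).
  2:{ intros i _. destruct (S i); [destruct (Rle_dec p (v i))|]; unfold Rdiv; ring. }
  rewrite sumR_div. set (x := sumR _ _).
  unfold Rmin. destruct (Rle_dec (x / p) k) as [H1|H1]; destruct (Rle_dec x (k*p)) as [H2|H2].
  - field. lra.
  - exfalso. apply H2. replace x with (x / p * p) by (field; lra).
    apply Rmult_le_compat_r; lra.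
  - exfalso. apply H1. replace k with (k * p / p) by (field; lra).
    unfold Rdiv. apply Rmult_le_compat_r; [apply Rlt_le, Rinv_0_lt_compat; lra|lra].
  - reflexivity.
Qed.

Lemma Bs_nonneg n v b S p : (forall i, (i < n)%nat -> 0 <= b i) -> 0 <= Bs n v b S p.
Proof.
  intros Hb. unfold Bs. apply sumR_nonneg. intros i Hi.
  destruct (S i); [destruct (Rle_dec p (v i))|]; try lra. apply Hb; auto.
Qed.

Lemma min_above n v (S : nat -> bool) p :
  (forall i, (i < n)%nat -> S i = true -> ~ p <= v i) \/
  (exists i, (i < n)%nat /\ S i = true /\ p <= v i /\
     forall l, (l < n)%nat -> S l = true -> p <= v l -> v i <= v l).
Proof.
  induction n.
  - left; intros; lia.
  - destruct IHn as [H|[i [Hi [HS [Hp Hm]]]]].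
    + destruct (S n) eqn:E; [destruct (Rle_dec p (v n))|].
      * right. exists n. repeat split; auto. intros l Hl HSl Hpl.
        destruct (Nat.eq_dec l n) as [->|]; [lra|]. exfalso; eapply H; eauto; lia.
      * left. intros l Hl HSl. destruct (Nat.eq_dec l n) as [->|]; auto. apply H; auto; lia.
      * left. intros l Hl HSl. destruct (Nat.eq_dec l n) as [->|]; [congruence|]. apply H; auto; lia.
    + destruct (S n) eqn:E; [destruct (Rle_dec p (v n)); [destruct (Rle_dec (v i) (v n))|]|].
      * right. exists i. repeat split; auto. intros l Hl HSl Hpl.
        destruct (Nat.eq_dec l n) as [->|]; auto. apply Hm; auto; lia.
      * right. exists n. repeat split; auto. intros l Hl HSl Hpl.
        destruct (Nat.eq_dec l n) as [->|]; [lra|]. assert (v i <= v l) by (apply Hm; auto; lia). lra.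
      * right. exists i. repeat split; auto. intros l Hl HSl Hpl.
        destruct (Nat.eq_dec l n) as [->|]; [contradiction|]. apply Hm; auto; lia.
      * right. exists i. repeat split; auto. intros l Hl HSl Hpl.
        destruct (Nat.eq_dec l n) as [->|]; [congruence|]. apply Hm; auto; lia.
Qed.

Lemma best_cand (rev : R -> R) n v (S : nat -> bool) :
  exists q, 0 < q /\ forall i, (i < n)%nat -> S i = true -> 0 < v i -> rev (v i) <= rev q.
Proof.
  induction n.
  - exists 1. split; [lra|]. intros; lia.
  - destruct IHn as [q [Hq H]].
    destruct (S n) eqn:E; [destruct (Rlt_dec 0 (v n)); [destruct (Rle_dec (rev (v n)) (rev q))|]|].
    + exists q. split; auto. intros i Hi HS Hv. destruct (Nat.eq_dec i n) as [->|]; auto. apply H; auto; lia.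
    + exists (v n). split; auto. intros i Hi HS Hv. destruct (Nat.eq_dec i n) as [->|]; [lra|].
      assert (rev (v i) <= rev q) by (apply H; auto; lia). lra.
    + exists q. split; auto. intros i Hi HS Hv. destruct (Nat.eq_dec i n) as [->|]; [lra|]. apply H; auto; lia.
    + exists q. split; auto. intros i Hi HS Hv. destruct (Nat.eq_dec i n) as [->|]; [congruence|]. apply H; auto; lia.
Qed.

Lemma OPT_exists n v b S k : 0 < k -> (forall i, (i < n)%nat -> 0 <= b i) ->
  exists r, is_OPT n v b S k r.
Proof.
  intros Hk Hb.
  destruct (best_cand (revenue n v b S k) n v (fun i => andb (Nat.ltb i n) (S i))) as [q [Hq H]].
  exists (revenue n v b S k q). split; [exists q; auto|].
  intros p Hp.
  destruct (min_above n v (fun i => andb (Nat.ltb i n) (S i)) p) as [Hn|[i [Hi [HS [Hpi Hm]]]]].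
  - assert (Bs n v b S p = 0).
    { unfold Bs. transitivity (sumR n (fun _ => 0)).
      - apply sumR_ext. intros i Hi. destruct (S i) eqn:E; [|auto].
        destruct (Rle_dec p (v i)); auto. exfalso. apply (Hn i Hi); auto.
        apply andb_true_intro; split; auto. apply Nat.ltb_lt; auto.
      - clear. induction n; simpl; lra. }
    rewrite rev_eq, H0 by auto. rewrite rev_eq by auto.
    assert (0 <= Bs n v b S q) by (apply Bs_nonneg; auto).
    assert (0 < k * p) by (apply Rmult_lt_0_compat; auto).
    assert (0 < k * q) by (apply Rmult_lt_0_compat; auto).
    unfold Rmin; destruct Rle_dec; destruct Rle_dec; lra.
  - assert (0 < v i) by lra.
    assert (revenue n v b S k (v i) <= revenue n v b S k q) by (apply H; auto).
    assert (Bs n v b S (v i) = Bs n v b S p).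
    { unfold Bs. apply sumR_ext. intros l Hl. destruct (S l) eqn:E; auto.
      destruct (Rle_dec (v i) (v l)); destruct (Rle_dec p (v l)); auto.
      - exfalso; lra.
      - exfalso. apply n0. apply Hm; auto. apply andb_true_intro; split; auto.
        apply Nat.ltb_lt; auto. }
    rewrite rev_eq in H1 by auto. rewrite H2 in H1. rewrite rev_eq by auto.
    assert (Rmin (Bs n v b S p) (k * p) <= Rmin (Bs n v b S p) (k * v i)).
    { unfold Rmin; destruct Rle_dec; destruct Rle_dec; nra. }
    lra.
Qed.

Lemma OPT_spec n v b S k : 0 < k -> (forall i, (i < n)%nat -> 0 <= b i) ->
  is_OPT n v b S k (OPT n v b S k).
Proof.
  intros Hk Hb. unfold OPT. apply epsilon_spec. apply OPT_exists; auto.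
Qed.

Lemma Bs_minus n v b j p : (j < n)%nat ->
  Bs n v b (minus1 n j) p + (if Rle_dec p (v j) then b j else 0) = Bs n v b (allN n) p.
Proof.
  intros Hj. unfold Bs.
  assert (forall k, (k <= n)%nat ->
    sumR k (fun i => if minus1 n j i then (if Rle_dec p (v i) then b i else 0) else 0)
    + (if Nat.ltb j k then (if Rle_dec p (v j) then b j else 0) else 0)
    = sumR k (fun i => if allN n i then (if Rle_dec p (v i) then b i else 0) else 0)).
  { induction k; intros Hk; simpl.
    - destruct (Nat.ltb j 0) eqn:E; [apply Nat.ltb_lt in E; lia| lra].
    - rewrite <- IHk by lia. unfold minus1, allN.
      assert (Nat.ltb k n = true) by (apply Nat.ltb_lt; lia). rewrite H. simpl.
      destruct (Nat.eq_dec k j) as [->|Hne].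
      + rewrite Nat.eqb_refl. simpl.
        assert (Nat.ltb j j = false) by (apply Nat.ltb_ge; lia).
        assert (Nat.ltb j (S j) = true) by (apply Nat.ltb_lt; lia).
        rewrite H0, H1. lra.
      + assert (Nat.eqb k j = false) by (apply Nat.eqb_neq; auto). rewrite H0. simpl.
        destruct (Nat.ltb_spec j k); destruct (Nat.ltb_spec j (S k)); try lia; lra. }
  specialize (H n (le_n n)). replace (Nat.ltb j n) with true in H by (symmetry; apply Nat.ltb_lt; auto).
  exact H.
Qed.

Lemma count_lemma n (P : nat -> Prop) :
  (forall j1 j2, (j1 < n)%nat -> (j2 < n)%nat -> ~ P j1 -> ~ P j2 -> j1 = j2) ->
  forall k, (k <= n)%nat ->
  ((forall j, (j < k)%nat -> P j) /\
     sumR k (fun j => if excluded_middle_informative (P j) then 1 else 0) = INR k) \/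
  (sumR k (fun j => if excluded_middle_informative (P j) then 1 else 0) >= INR k - 1 /\
     exists j, (j < k)%nat /\ ~ P j).
Proof.
  intros Huniq. induction k; intros Hk.
  - left. split; [intros; lia|]. simpl; lra.
  - rewrite S_INR. simpl. destruct (excluded_middle_informative (P k)) as [HP|HP].
    + destruct (IHk ltac:(lia)) as [[H1 H2]|[H1 [j [Hj HPj]]]].
      * left. split; [|lra]. intros j Hj. destruct (Nat.eq_dec j k) as [->|]; auto. apply H1; lia.
      * right. split; [lra|]. exists j; split; auto; lia.
    + destruct (IHk ltac:(lia)) as [[H1 H2]|[H1 [j [Hj HPj]]]].
      * right. split; [lra|]. exists k; split; auto.
      * exfalso. assert (j = k) by (apply Huniq; auto; lia). lia.
Qed.

Theorem lemma2 (n : nat) (v b : nat -> R) (m : R)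
  (hn : (1 <= n)%nat)
  (hv : forall i, (i < n)%nat -> 0 <= v i)
  (hb : forall i, (i < n)%nat -> 0 <= b i)
  (hm : 0 < m) :
  prob_unif n (fun j => OPT n v b (minus1 n j) m >= / 2 * OPT n v b (allN n) m)
  >= 1 - 1 / INR n.
Proof.
  destruct (OPT_spec n v b (allN n) m hm hb) as [[p [Hp HR]] _].
  set (R0 := OPT n v b (allN n) m) in *.
  set (B := Bs n v b (allN n) p).
  assert (HB0 : 0 <= B) by (apply Bs_nonneg; auto).
  rewrite rev_eq in HR by auto. fold B in HR.
  assert (Hbad : forall j, (j < n)%nat ->
            ~ (OPT n v b (minus1 n j) m >= / 2 * R0) -> p <= v j /\ b j > B / 2).
  { intros j Hj Hnot.
    destruct (OPT_spec n v b (minus1 n j) m hm hb) as [_ Hle].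
    specialize (Hle p Hp). rewrite rev_eq in Hle by auto.
    pose proof (Bs_minus n v b j p Hj) as Hm. fold B in Hm.
    assert (Hlt : Rmin (Bs n v b (minus1 n j) p) (m * p) < / 2 * R0) by lra.
    destruct (Rle_dec p (v j)) as [Hpv|Hpv].
    - split; auto. rewrite <- HR in Hlt. revert Hlt. unfold Rmin.
      destruct Rle_dec; destruct Rle_dec; intros; nra.
    - exfalso. rewrite <- HR in Hlt. replace (Bs n v b (minus1 n j) p) with B in Hlt by lra.
      unfold Rmin in Hlt. destruct Rle_dec in Hlt; nra. }
  assert (Huniq : forall j1 j2, (j1 < n)%nat -> (j2 < n)%nat ->
     ~ (OPT n v b (minus1 n j1) m >= / 2 * R0) -> ~ (OPT n v b (minus1 n j2) m >= / 2 * R0) -> j1 = j2).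
  { intros j1 j2 H1 H2 N1 N2. destruct (Nat.eq_dec j1 j2) as [|Hne]; auto. exfalso.
    destruct (Hbad j1 H1 N1) as [P1 B1]. destruct (Hbad j2 H2 N2) as [P2 B2].
    pose proof (Bs_minus n v b j1 p H1) as E. fold B in E.
    destruct (Rle_dec p (v j1)); [|contradiction].
    assert (b j2 <= Bs n v b (minus1 n j1) p).
    { unfold Bs.
      pose proof (sumR_ge_term n (fun i => if minus1 n j1 i then (if Rle_dec p (v i) then b i else 0) else 0) j2) as G.
      simpl in G. unfold minus1 in G at 2.
      replace (Nat.ltb j2 n) with true in G by (symmetry; apply Nat.ltb_lt; auto).
      replace (Nat.eqb j2 j1) with false in G by (symmetry; apply Nat.eqb_neq; auto).
      simpl in G. destruct (Rle_dec p (v j2)); [|contradiction]. apply G; auto.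
      intros i Hi. destruct (minus1 n j1 i); [destruct Rle_dec|]; try lra. apply hb; auto. }
    lra. }
  unfold prob_unif.
  destruct (count_lemma n _ Huniq n (le_n n)) as [[_ H]|[H _]].
  - rewrite H. assert (0 < INR n) by (apply lt_0_INR; lia).
    assert (0 < 1 / INR n) by (apply Rdiv_lt_0_compat; lra).
    replace (INR n / INR n) with 1 by (field; lra). lra.
  - assert (0 < INR n) by (apply lt_0_INR; lia).
    apply Rle_ge. replace (1 - 1 / INR n) with ((INR n - 1) / INR n) by (field; lra).
    unfold Rdiv. apply Rmult_le_compat_r; [apply Rlt_le, Rinv_0_lt_compat; lra|lra].
Qed.
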